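(* Fix an integer horizon $T\ge 1$ and positive constants $s,k_u,m,\delta_1,\delta_2,\gamma,q,k_w,n,A,M_1$ with $0<m<1$, $0<n<1$, and constants $M_2\ge 0$, $0<N<1$. Consider the discrete-time controlled system (Model A) \[ \begin{aligned} u_{t+1}&=u_t\Big[s\Big(1-\tfrac{u_t}{k_u}\Big)\Big(\tfrac{u_t}{k_u}-m\Big)+1\Big](1-\delta_1 v_t)+h_t w_t\Big[q\Big(1-\tfrac{w_t}{k_w}\Big)\Big(\tfrac{w_t}{k_w}-n\Big)+1\Big],\\ v_{t+1}&=\Big(v_t+u_t\Big[s\Big(1-\tfrac{u_t}{k_u}\Big)\Big(\tfrac{u_t}{k_u}-m\Big)+1\Big]\delta_2 v_t\Big)(1-\gamma),\\ w_{t+1}&=(w_t-h_t w_t)\Big[q\Big(1-\tfrac{w_t}{k_w}\Big)\Big(\tfrac{w_t}{k_w}-n\Big)+1\Big], \end{aligned} \qquad t=0,1,\dots,T-1, \] with given initial values $u_0,v_0,w_0$, where the control ${\bf h}=(h_0,\dots,h_{T-1})$ ranges over the control set $\Omega=\{{\bf h}: 0\le h_t\le A,\ t=0,\dots,T-1\}$, and the objective functional to be maximized is \[ J({\bf h})=u_T+N w_T-\sum_{t=0}^{T-1}\big(M_1 h_t^2+M_2 h_t\big). \] Let ${\bf h}^\ast=(h^\ast_0,\dots,h^\ast_{T-1})\in\Omega$ be an optimal control with corresponding state solutions ${\bf u}^\ast=(u^\ast_0,\dots,u^\ast_T)$, ${\bf v}^\ast=(v^\ast_0,\dots,v^\ast_T)$,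 ${\bf w}^\ast=(w^\ast_0,\dots,w^\ast_T)$. Then there exist adjoint vectors $\lambda_{\bf u}=(\lambda_{u,0},\dots,\lambda_{u,T})$, $\lambda_{\bf v}=(\lambda_{v,0},\dots,\lambda_{v,T})$, $\lambda_{\bf w}=(\lambda_{w,0},\dots,\lambda_{w,T})$ satisfying, for $t=0,\dots,T-1$, \[ \begin{aligned} \lambda_{u,t}=&\Big((1-\delta_1 v^\ast_t)\lambda_{u,t+1}+\delta_2 v^\ast_t(1-\gamma)\lambda_{v,t+1}\Big)\Big[s\Big(1-\tfrac{u^\ast_t}{k_u}\Big)\Big(\tfrac{u^\ast_t}{k_u}-m\Big)+1\Big]\\ &+\Big(u^\ast_t(1-\delta_1 v^\ast_t)\lambda_{u,t+1}+u^\ast_t\delta_2 v^\ast_t(1-\gamma)\lambda_{v,t+1}\Big)\Big[\tfrac{s}{k_u}\Big(1-\tfrac{u^\ast_t}{k_u}\Big)-\tfrac{s}{k_u}\Big(\tfrac{u^\ast_t}{k_u}-m\Big)\Big],\\ \lambda_{v,t}=&-\lambda_{u,t+1}u^\ast_t\Big[s\Big(1-\tfrac{u^\ast_t}{k_u}\Big)\Big(\tfrac{u^\ast_t}{k_u}-m\Big)+1\Big]\delta_1\\ &+\lambda_{v,t+1}\Big[1+u^\ast_t\Big(s\Big(1-\tfrac{u^\ast_t}{k_u}\Big)\Big(\tfrac{u^\ast_t}{k_u}-m\Big)+1\Big)\delta_2\Big](1-\gamma),\\ \lambda_{w,t}=&\Big(h^\ast_t\lambda_{u,t+1}+(1-h^\ast_t)\lambda_{w,t+1}\Big)\Big[q\Big(1-\tfrac{w^\ast_t}{k_w}\Big)\Big(\tfrac{w^\ast_t}{k_w}-n\Big)+1\Big]\\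 &+w^\ast_t\Big(h^\ast_t\lambda_{u,t+1}+(1-h^\ast_t)\lambda_{w,t+1}\Big)\Big[\tfrac{q}{k_w}\Big(1-\tfrac{w^\ast_t}{k_w}\Big)-\tfrac{q}{k_w}\Big(\tfrac{w^\ast_t}{k_w}-n\Big)\Big], \end{aligned} \] with transversality conditions $\lambda_{u,T}=1$, $\lambda_{v,T}=0$, $\lambda_{w,T}=N$. Moreover, for $t=0,\dots,T-1$, \[ h^\ast_t=\min\left\{A,\ \max\left\{0,\ \frac{(\lambda_{u,t+1}-\lambda_{w,t+1})\Big[q\Big(1-\tfrac{w^\ast_t}{k_w}\Big)\Big(\tfrac{w^\ast_t}{k_w}-n\Big)+1\Big]w^\ast_t-M_2}{2M_1}\right\}\right\}. \]
   Context: Here $u_t$, $v_t$, $w_t$ denote the prey (target), predator and reserve population sizes at time step $t$; $h_t$ is the proportion of the reserve population translocated to the target population at step $t$. The parameters: $s$, $q$ are intrinsic growth rates of prey and reserve, $k_u$, $k_w$ their carrying capacities, $m,n\in(0,1)$ strong Allee constants, $\delta_1$ the consumption rate, $\delta_2$ the attack rate, $\gamma$ the predator decay rate, $A$ the maximum control effort, $M_1>0$, $M_2\ge 0$ cost constants and $N\in(0,1)$ the weight on the final reserve population. In the paper's setting the initial reserve population satisfies $w_0>nk_w$ and the initial prey population is below its growth threshold. *)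

(* Defs.v *)
From Stdlib Require Import Reals.
Open Scope R_scope.

Definition growth (s k m x : R) : R := s * (1 - x / k) * (x / k - m) + 1.

Fixpoint modelA (s ku m d1 d2 g q kw n u0 v0 w0 : R) (h : nat -> R) (t : nat)
  : R * R * R :=
  match t with
  | O => (u0, v0, w0)
  | S t' =>
      let '(u, v, w) := modelA s ku m d1 d2 g q kw n u0 v0 w0 h t' in
      (u * growth s ku m u * (1 - d1 * v) + h t' * w * growth q kw n w,
       (v + u * growth s ku m u * d2 * v) * (1 - g),
       (w - h t' * w) * growth q kw n w)
  end.

Definition uA s ku m d1 d2 g q kw n u0 v0 w0 h t :=
  fst (fst (modelA s ku m d1 d2 g q kw n u0 v0 w0 h t)).
Definition vA s ku m d1 d2 g q kw n u0 v0 w0 h t :=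
  snd (fst (modelA s ku m d1 d2 g q kw n u0 v0 w0 h t)).
Definition wA s ku m d1 d2 g q kw n u0 v0 w0 h t :=
  snd (modelA s ku m d1 d2 g q kw n u0 v0 w0 h t).

Fixpoint sum_lt (f : nat -> R) (T : nat) : R :=
  match T with O => 0 | S T' => sum_lt f T' + f T' end.

Definition in_Omega (A : R) (T : nat) (h : nat -> R) : Prop :=
  forall t, (t < T)%nat -> 0 <= h t <= A.

Definition J_A s ku m d1 d2 g q kw n u0 v0 w0 M1 M2 N T h : R :=
  uA s ku m d1 d2 g q kw n u0 v0 w0 h T + N * wA s ku m d1 d2 g q kw n u0 v0 w0 h T
  - sum_lt (fun t => M1 * (h t)^2 + M2 * h t) T.

(* Main.v *)
Require Import Defs.
From Stdlib Require Import Reals Lra Lia FunctionalExtensionality.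
From Coquelicot Require Import Coquelicot.
Open Scope R_scope.

Definition Gp (s k m x : R) : R := s / k * (1 - x / k) - s / k * (x / k - m).

Lemma dplus (f g : R -> R) x a b : is_derive f x a -> is_derive g x b ->
  is_derive (fun y => f y + g y) x (a + b).
Proof. intros; apply (is_derive_plus f g); auto. Qed.
Lemma dminus (f g : R -> R) x a b : is_derive f x a -> is_derive g x b ->
  is_derive (fun y => f y - g y) x (a - b).
Proof. intros; apply (is_derive_minus f g); auto. Qed.
Lemma dmult (f g : R -> R) x a b : is_derive f x a -> is_derive g x b ->
  is_derive (fun y => f y * g y) x (a * g x + f x * b).
Proof. intros; apply (is_derive_mult f g); auto. intros; apply Rmult_comm. Qed.
Lemma dconst (c x : R) : is_derive (fun _ => c) x 0.
Proof. apply (is_derive_const (V:=R_NormedModule) c x). Qed.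
Lemma deq (f : R -> R) x l l' : is_derive f x l -> l = l' -> is_derive f x l'.
Proof. intros H ->; exact H. Qed.

Lemma growth_d s k m x : k <> 0 -> is_derive (growth s k m) x (Gp s k m x).
Proof. intros Hk. unfold growth, Gp. auto_derive; auto. field. auto. Qed.

Lemma dgrowth s k m (f : R -> R) x df : k <> 0 -> is_derive f x df ->
  is_derive (fun y => growth s k m (f y)) x (Gp s k m (f x) * df).
Proof.
  intros Hk H. eapply deq. apply (is_derive_comp (growth s k m) f); [apply growth_d; auto | exact H].
  simpl. unfold scal; simpl. unfold mult; simpl. ring.
Qed.

Lemma dmax_right (f : R -> R) l d : is_derive f 0 l -> 0 < d ->
  (forall e, 0 < e < d -> f e <= f 0) -> l <= 0.
Proof.
  intros H Hd Hf. apply is_derive_Reals in H.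
  destruct (Rle_or_lt l 0) as [|Hl]; auto.
  destruct (H l Hl) as [del Hdel].
  set (h := Rmin (d/2) (del/2)).
  assert (Hh0 : 0 < h) by (unfold h; apply Rmin_glb_lt; destruct del; simpl; lra).
  assert (Hh1 : h < d) by (unfold h; eapply Rle_lt_trans; [apply Rmin_l|lra]).
  assert (Hh2 : Rabs h < del) by (rewrite Rabs_pos_eq by lra; unfold h;
     eapply Rle_lt_trans; [apply Rmin_r| destruct del; simpl; lra]).
  specialize (Hdel h ltac:(lra) Hh2). apply Rabs_def2 in Hdel.
  rewrite Rplus_0_l in Hdel. specialize (Hf h (conj Hh0 Hh1)).
  assert ((f h - f 0) / h <= 0).
  { unfold Rdiv. assert (0 < / h) by (apply Rinv_0_lt_compat; lra). nra. }
  lra.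
Qed.

Lemma modelA_S s ku m d1 d2 g q kw n u0 v0 w0 h j :
  modelA s ku m d1 d2 g q kw n u0 v0 w0 h (S j) =
  (uA s ku m d1 d2 g q kw n u0 v0 w0 h j * growth s ku m (uA s ku m d1 d2 g q kw n u0 v0 w0 h j)
     * (1 - d1 * vA s ku m d1 d2 g q kw n u0 v0 w0 h j)
   + h j * wA s ku m d1 d2 g q kw n u0 v0 w0 h j * growth q kw n (wA s ku m d1 d2 g q kw n u0 v0 w0 h j),
   (vA s ku m d1 d2 g q kw n u0 v0 w0 h j + uA s ku m d1 d2 g q kw n u0 v0 w0 h j
      * growth s ku m (uA s ku m d1 d2 g q kw n u0 v0 w0 h j) * d2 * vA s ku m d1 d2 g q kw n u0 v0 w0 h j) * (1 - g),
   (wA s ku m d1 d2 g q kw n u0 v0 w0 h j - h j * wA s ku m d1 d2 g q kw n u0 v0 w0 h j)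
      * growth q kw n (wA s ku m d1 d2 g q kw n u0 v0 w0 h j)).
Proof.
  unfold uA, vA, wA. simpl. destruct (modelA s ku m d1 d2 g q kw n u0 v0 w0 h j) as [[a b] c].
  reflexivity.
Qed.

Lemma modelA_ext s ku m d1 d2 g q kw n u0 v0 w0 h1 h2 :
  (forall k, h1 k = h2 k) -> forall j,
  modelA s ku m d1 d2 g q kw n u0 v0 w0 h1 j = modelA s ku m d1 d2 g q kw n u0 v0 w0 h2 j.
Proof.
  intros H j; induction j as [|j IH]; [reflexivity|].
  simpl. rewrite IH, H. reflexivity.
Qed.

Fixpoint Dd (s ku m d1 d2 g q kw n : R) (u v w h : nat -> R) (t j : nat) : R * R * R :=
  match j with
  | O => (0, 0, 0)
  | S j' =>
    let '(a, b, c) := Dd s ku m d1 d2 g q kw n u v w h t j' in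
    let e := if Nat.eqb j' t then 1 else 0 in
    (a * (growth s ku m (u j') + u j' * Gp s ku m (u j')) * (1 - d1 * v j')
       + u j' * growth s ku m (u j') * (- d1 * b)
       + e * w j' * growth q kw n (w j')
       + h j' * (c * (growth q kw n (w j') + w j' * Gp q kw n (w j'))),
     (b + (a * (growth s ku m (u j') + u j' * Gp s ku m (u j')) * d2 * v j'
           + u j' * growth s ku m (u j') * d2 * b)) * (1 - g),
     (c - (e * w j' + h j' * c)) * growth q kw n (w j')
       + (w j' - h j' * w j') * (Gp q kw n (w j') * c))
  end.

Fixpoint Lb (s ku m d1 d2 g q kw n N : R) (u v w h : nat -> R) (T k : nat) : R * R * R :=
  match k with
  | O => (1, 0, N)
  | S k' =>
    let '(a, b, c) := Lb s ku m d1 d2 g q kw n N u v w h T k' in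
    (((1 - d1 * v (T - S k')%nat) * a + d2 * v (T - S k')%nat * (1 - g) * b)
                * (s * (1 - u (T - S k')%nat / ku) * (u (T - S k')%nat / ku - m) + 1)
            + (u (T - S k')%nat * (1 - d1 * v (T - S k')%nat) * a + u (T - S k')%nat * d2 * v (T - S k')%nat * (1 - g) * b)
                * (s / ku * (1 - u (T - S k')%nat / ku) - s / ku * (u (T - S k')%nat / ku - m)),
     - a * u (T - S k')%nat * (s * (1 - u (T - S k')%nat / ku) * (u (T - S k')%nat / ku - m) + 1) * d1
            + b * (1 + u (T - S k')%nat * (s * (1 - u (T - S k')%nat / ku) * (u (T - S k')%nat / ku - m) + 1) * d2)
                * (1 - g),
     (h (T - S k')%nat * a + (1 - h (T - S k')%nat) * c)
                * (q * (1 - w (T - S k')%nat / kw) * (w (T - S k')%nat / kw - n) + 1)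
            + w (T - S k')%nat * (h (T - S k')%nat * a + (1 - h (T - S k')%nat) * c)
                * (q / kw * (1 - w (T - S k')%nat / kw) - q / kw * (w (T - S k')%nat / kw - n)))
  end.

Lemma Dd_S s ku m d1 d2 g q kw n u v w h t j :
  Dd s ku m d1 d2 g q kw n u v w h t (S j) =
  (let a := fst (fst (Dd s ku m d1 d2 g q kw n u v w h t j)) in
   let b := snd (fst (Dd s ku m d1 d2 g q kw n u v w h t j)) in
   let c := snd (Dd s ku m d1 d2 g q kw n u v w h t j) in
    let e := if Nat.eqb j t then 1 else 0 in
    (a * (growth s ku m (u j) + u j * Gp s ku m (u j)) * (1 - d1 * v j)
       + u j * growth s ku m (u j) * (- d1 * b)
       + e * w j * growth q kw n (w j)
       + h j * (c * (growth q kw n (w j) + w j * Gp q kw n (w j))),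
     (b + (a * (growth s ku m (u j) + u j * Gp s ku m (u j)) * d2 * v j
           + u j * growth s ku m (u j) * d2 * b)) * (1 - g),
     (c - (e * w j + h j * c)) * growth q kw n (w j)
       + (w j - h j * w j) * (Gp q kw n (w j) * c))).
Proof. simpl. destruct (Dd s ku m d1 d2 g q kw n u v w h t j) as [[a b] c]. reflexivity. Qed.

Lemma Dd_zero s ku m d1 d2 g q kw n u v w h t j : (j <= t)%nat ->
  Dd s ku m d1 d2 g q kw n u v w h t j = (0, 0, 0).
Proof.
  induction j as [|j IH]; intros Hj; [reflexivity|].
  simpl. rewrite IH by lia. replace (Nat.eqb j t) with false by (symmetry; apply Nat.eqb_neq; lia).
  f_equal; [f_equal|]; ring.
Qed.

Lemma uA_S s ku m d1 d2 g q kw n u0 v0 w0 h j :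
  uA s ku m d1 d2 g q kw n u0 v0 w0 h (S j) =
  uA s ku m d1 d2 g q kw n u0 v0 w0 h j * growth s ku m (uA s ku m d1 d2 g q kw n u0 v0 w0 h j)
     * (1 - d1 * vA s ku m d1 d2 g q kw n u0 v0 w0 h j)
   + h j * wA s ku m d1 d2 g q kw n u0 v0 w0 h j * growth q kw n (wA s ku m d1 d2 g q kw n u0 v0 w0 h j).
Proof. unfold uA at 1. rewrite modelA_S. reflexivity. Qed.
Lemma vA_S s ku m d1 d2 g q kw n u0 v0 w0 h j :
  vA s ku m d1 d2 g q kw n u0 v0 w0 h (S j) =
   (vA s ku m d1 d2 g q kw n u0 v0 w0 h j + uA s ku m d1 d2 g q kw n u0 v0 w0 h j
      * growth s ku m (uA s ku m d1 d2 g q kw n u0 v0 w0 h j) * d2 * vA s ku m d1 d2 g q kw n u0 v0 w0 h j) * (1 - g).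
Proof. unfold vA at 1. rewrite modelA_S. reflexivity. Qed.
Lemma wA_S s ku m d1 d2 g q kw n u0 v0 w0 h j :
  wA s ku m d1 d2 g q kw n u0 v0 w0 h (S j) =
   (wA s ku m d1 d2 g q kw n u0 v0 w0 h j - h j * wA s ku m d1 d2 g q kw n u0 v0 w0 h j)
      * growth q kw n (wA s ku m d1 d2 g q kw n u0 v0 w0 h j).
Proof. unfold wA at 1. rewrite modelA_S. reflexivity. Qed.

Ltac dtac := repeat match goal with
  | H : is_derive ?f _ _ |- is_derive ?f _ _ => exact H
  | |- is_derive (fun _ => ?c) _ _ => apply (dconst c)
  | |- is_derive (fun y => growth _ _ _ _) _ _ => apply dgrowth; [assumption|]
  | |- is_derive (fun y => _ + _) _ _ => apply dplus
  | |- is_derive (fun y => _ - _) _ _ => apply dminus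
  | |- is_derive (fun y => _ * _) _ _ => apply dmult
  end.

Lemma states_deriv s ku m d1 d2 g q kw n u0 v0 w0 (hs : nat -> R) t
  (u v w : nat -> R) (pert : R -> nat -> R) :
  ku <> 0 -> kw <> 0 ->
  (forall j, u j = uA s ku m d1 d2 g q kw n u0 v0 w0 hs j) ->
  (forall j, v j = vA s ku m d1 d2 g q kw n u0 v0 w0 hs j) ->
  (forall j, w j = wA s ku m d1 d2 g q kw n u0 v0 w0 hs j) ->
  (forall e j, pert e j = hs j + (if Nat.eqb j t then e else 0)) ->
  forall j,
  is_derive (fun e => uA s ku m d1 d2 g q kw n u0 v0 w0 (pert e) j) 0
     (fst (fst (Dd s ku m d1 d2 g q kw n u v w hs t j))) /\
  is_derive (fun e => vA s ku m d1 d2 g q kw n u0 v0 w0 (pert e) j) 0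
     (snd (fst (Dd s ku m d1 d2 g q kw n u v w hs t j))) /\
  is_derive (fun e => wA s ku m d1 d2 g q kw n u0 v0 w0 (pert e) j) 0
     (snd (Dd s ku m d1 d2 g q kw n u v w hs t j)).
Proof.
  intros Hku Hkw Hu Hv Hw Hp.
  assert (Hm : forall j, modelA s ku m d1 d2 g q kw n u0 v0 w0 (pert 0) j
                      = modelA s ku m d1 d2 g q kw n u0 v0 w0 hs j).
  { apply modelA_ext. intros k. rewrite Hp. destruct (Nat.eqb k t); ring. }
  assert (Eu : forall j, uA s ku m d1 d2 g q kw n u0 v0 w0 (pert 0) j = u j).
  { intros j; rewrite Hu; unfold uA; rewrite Hm; reflexivity. }
  assert (Ev : forall j, vA s ku m d1 d2 g q kw n u0 v0 w0 (pert 0) j = v j).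
  { intros j; rewrite Hv; unfold vA; rewrite Hm; reflexivity. }
  assert (Ew : forall j, wA s ku m d1 d2 g q kw n u0 v0 w0 (pert 0) j = w j).
  { intros j; rewrite Hw; unfold wA; rewrite Hm; reflexivity. }
  intros j; induction j as [|j IH]; [|destruct IH as [IHu [IHv IHw]]].
  - simpl. unfold uA, vA, wA. simpl. split; [|split]; apply dconst.
  - assert (Hpj : is_derive (fun e => pert e j) 0 (if Nat.eqb j t then 1 else 0)).
    { eapply is_derive_ext. intros e; symmetry; apply Hp.
      destruct (Nat.eqb j t).
      - eapply deq. apply dplus. apply dconst. apply (is_derive_id (K:=R_AbsRing)). simpl. unfold one; simpl. ring.
      - apply dconst. }
    rewrite Dd_S. cbv zeta. simpl fst; simpl snd.
    split; [|split].
    + eapply is_derive_ext. intros e; symmetry; apply uA_S.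
      eapply deq. dtac. cbv beta. match goal with |- ?a = ?b => change (@eq R a b) end. rewrite ?Eu, ?Ev, ?Ew, ?Hp. destruct (Nat.eqb j t); ring.
    + eapply is_derive_ext. intros e; symmetry; apply vA_S.
      eapply deq. dtac. cbv beta. match goal with |- ?a = ?b => change (@eq R a b) end. rewrite ?Eu, ?Ev, ?Ew. ring.
    + eapply is_derive_ext. intros e; symmetry; apply wA_S.
      eapply deq. dtac. cbv beta. match goal with |- ?a = ?b => change (@eq R a b) end. rewrite ?Eu, ?Ev, ?Ew, ?Hp. destruct (Nat.eqb j t); ring.
Qed.

Lemma Lb_S s ku m d1 d2 g q kw n N u v w h T k :
  Lb s ku m d1 d2 g q kw n N u v w h T (S k) =
  (let a := fst (fst (Lb s ku m d1 d2 g q kw n N u v w h T k)) in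
   let b := snd (fst (Lb s ku m d1 d2 g q kw n N u v w h T k)) in
   let c := snd (Lb s ku m d1 d2 g q kw n N u v w h T k) in
    (((1 - d1 * v (T - S k)%nat) * a + d2 * v (T - S k)%nat * (1 - g) * b)
                * (s * (1 - u (T - S k)%nat / ku) * (u (T - S k)%nat / ku - m) + 1)
            + (u (T - S k)%nat * (1 - d1 * v (T - S k)%nat) * a + u (T - S k)%nat * d2 * v (T - S k)%nat * (1 - g) * b)
                * (s / ku * (1 - u (T - S k)%nat / ku) - s / ku * (u (T - S k)%nat / ku - m)),
     - a * u (T - S k)%nat * (s * (1 - u (T - S k)%nat / ku) * (u (T - S k)%nat / ku - m) + 1) * d1
            + b * (1 + u (T - S k)%nat * (s * (1 - u (T - S k)%nat / ku) * (u (T - S k)%nat / ku - m) + 1) * d2)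
                * (1 - g),
     (h (T - S k)%nat * a + (1 - h (T - S k)%nat) * c)
                * (q * (1 - w (T - S k)%nat / kw) * (w (T - S k)%nat / kw - n) + 1)
            + w (T - S k)%nat * (h (T - S k)%nat * a + (1 - h (T - S k)%nat) * c)
                * (q / kw * (1 - w (T - S k)%nat / kw) - q / kw * (w (T - S k)%nat / kw - n)))).
Proof. simpl. destruct (Lb s ku m d1 d2 g q kw n N u v w h T k) as [[a b] c]. reflexivity. Qed.

Definition inner s ku m d1 d2 g q kw n N (u v w h : nat -> R) T t j :=
  fst (fst (Lb s ku m d1 d2 g q kw n N u v w h T (T - j))) * fst (fst (Dd s ku m d1 d2 g q kw n u v w h t j))
  + snd (fst (Lb s ku m d1 d2 g q kw n N u v w h T (T - j))) * snd (fst (Dd s ku m d1 d2 g q kw n u v w h t j))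
  + snd (Lb s ku m d1 d2 g q kw n N u v w h T (T - j)) * snd (Dd s ku m d1 d2 g q kw n u v w h t j).

Lemma inner_const s ku m d1 d2 g q kw n N u v w h T t j :
  (S t <= j <= T)%nat ->
  inner s ku m d1 d2 g q kw n N u v w h T t j = inner s ku m d1 d2 g q kw n N u v w h T t (S t).
Proof.
  induction j as [|j IH]; intros Hj; [lia|].
  destruct (Nat.eq_dec j t) as [->|Hne]; [reflexivity|].
  rewrite <- IH by lia. unfold inner.
  replace (T - j)%nat with (S (T - S j)) by lia.
  rewrite Lb_S, Dd_S. cbv zeta.
  replace (T - S (T - S j))%nat with j by lia.
  replace (Nat.eqb j t) with false by (symmetry; apply Nat.eqb_neq; auto).
  unfold growth, Gp. simpl fst; simpl snd. ring.
Qed.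

Lemma inner_start s ku m d1 d2 g q kw n N u v w h T t :
  inner s ku m d1 d2 g q kw n N u v w h T t (S t) =
  (fst (fst (Lb s ku m d1 d2 g q kw n N u v w h T (T - S t)))
   - snd (Lb s ku m d1 d2 g q kw n N u v w h T (T - S t))) * w t * growth q kw n (w t).
Proof.
  unfold inner. rewrite Dd_S. cbv zeta. rewrite Dd_zero by lia. rewrite Nat.eqb_refl.
  simpl fst; simpl snd. ring.
Qed.

Lemma inner_end s ku m d1 d2 g q kw n N u v w h T t :
  inner s ku m d1 d2 g q kw n N u v w h T t T =
  fst (fst (Dd s ku m d1 d2 g q kw n u v w h t T)) + N * snd (Dd s ku m d1 d2 g q kw n u v w h t T).
Proof. unfold inner. rewrite Nat.sub_diag. simpl. ring. Qed.

Lemma sum_deriv M1 M2 (hs : nat -> R) t (pert : R -> nat -> R) :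
  (forall e j, pert e j = hs j + (if Nat.eqb j t then e else 0)) ->
  forall T', is_derive (fun e => sum_lt (fun k => M1 * (pert e k)^2 + M2 * pert e k) T') 0
    (if Nat.ltb t T' then 2 * M1 * hs t + M2 else 0).
Proof.
  intros Hp T'. induction T' as [|T' IH].
  - simpl. apply dconst.
  - cbn [sum_lt].
    assert (Hk : is_derive (fun e => M1 * (pert e T')^2 + M2 * pert e T') 0
                   (if Nat.eqb T' t then 2 * M1 * hs T' + M2 else 0)).
    { apply (is_derive_ext (fun e => M1 * (hs T' + (if Nat.eqb T' t then e else 0))^2 + M2 * (hs T' + (if Nat.eqb T' t then e else 0)))).
      intros e; rewrite Hp; reflexivity.
      destruct (Nat.eqb T' t).
      + auto_derive. exact I. ring.
      + auto_derive. exact I. ring. }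
    eapply deq. apply dplus. exact IH. exact Hk.
    simpl. match goal with |- ?a = ?b => change (@eq R a b) end.
      destruct (Nat.ltb_spec t T'), (Nat.ltb_spec t (S T')), (Nat.eqb_spec T' t); subst;
        try lia; ring.
Qed.

Lemma dmax_left (f : R -> R) l d : is_derive f 0 l -> 0 < d ->
  (forall e, - d < e < 0 -> f e <= f 0) -> 0 <= l.
Proof.
  intros H Hd Hf.
  assert (H' : is_derive (fun e => f (- e)) 0 (- l)).
  { eapply deq. apply (is_derive_comp f (fun e => - e)).
    rewrite Ropp_0. exact H.
    apply (is_derive_opp (fun e : R => e)). apply (is_derive_id (K:=R_AbsRing)).
    simpl. unfold scal, opp, one; simpl. unfold mult; simpl. ring. }
  assert (- l <= 0); [|lra].
  apply (dmax_right _ _ d H' Hd). intros e He. rewrite Ropp_0. apply Hf. lra.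
Qed.

Theorem theorem1 (T : nat) (s ku m d1 d2 g q kw n A M1 M2 N u0 v0 w0 : R)
  (hstar : nat -> R) :
  (1 <= T)%nat ->
  0 < s -> 0 < ku -> 0 < m -> m < 1 -> 0 < d1 -> 0 < d2 -> 0 < g ->
  0 < q -> 0 < kw -> 0 < n -> n < 1 -> 0 < A -> 0 < M1 -> 0 <= M2 ->
  0 < N -> N < 1 ->
  in_Omega A T hstar ->
  (forall h, in_Omega A T h ->
     J_A s ku m d1 d2 g q kw n u0 v0 w0 M1 M2 N T h <=
     J_A s ku m d1 d2 g q kw n u0 v0 w0 M1 M2 N T hstar) ->
  let u := uA s ku m d1 d2 g q kw n u0 v0 w0 hstar in
  let v := vA s ku m d1 d2 g q kw n u0 v0 w0 hstar in
  let w := wA s ku m d1 d2 g q kw n u0 v0 w0 hstar in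
  exists lu lv lw : nat -> R,
    (forall t, (t < T)%nat ->
       lu t = ((1 - d1 * v t) * lu (S t) + d2 * v t * (1 - g) * lv (S t))
                * (s * (1 - u t / ku) * (u t / ku - m) + 1)
            + (u t * (1 - d1 * v t) * lu (S t) + u t * d2 * v t * (1 - g) * lv (S t))
                * (s / ku * (1 - u t / ku) - s / ku * (u t / ku - m))
       /\
       lv t = - lu (S t) * u t * (s * (1 - u t / ku) * (u t / ku - m) + 1) * d1
            + lv (S t) * (1 + u t * (s * (1 - u t / ku) * (u t / ku - m) + 1) * d2)
                * (1 - g)
       /\
       lw t = (hstar t * lu (S t) + (1 - hstar t) * lw (S t))
                * (q * (1 - w t / kw) * (w t / kw - n) + 1)
            + w t * (hstar t * lu (S t) + (1 - hstar t) * lw (S t))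
                * (q / kw * (1 - w t / kw) - q / kw * (w t / kw - n))) /\
    lu T = 1 /\ lv T = 0 /\ lw T = N /\
    (forall t, (t < T)%nat ->
       hstar t = Rmin A (Rmax 0
         (((lu (S t) - lw (S t)) * (q * (1 - w t / kw) * (w t / kw - n) + 1) * w t - M2)
          / (2 * M1)))).
Proof.
  intros HT Hs Hku Hm Hm1 Hd1 Hd2 Hg Hq Hkw Hn Hn1 HA HM1 HM2 HN HN1 Hom Hopt u v w.
  set (LB := Lb s ku m d1 d2 g q kw n N u v w hstar T).
  exists (fun t => fst (fst (LB (T - t)%nat))), (fun t => snd (fst (LB (T - t)%nat))),
         (fun t => snd (LB (T - t)%nat)).
  split; [|split; [|split; [|split]]].
  - intros t Ht. cbv beta.
    replace (T - t)%nat with (S (T - S t)) by lia.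
    unfold LB. rewrite Lb_S. cbv zeta. simpl fst; simpl snd.
    replace (T - S (T - S t))%nat with t by lia.
    split; [|split]; reflexivity.
  - cbv beta. rewrite Nat.sub_diag. reflexivity.
  - cbv beta. rewrite Nat.sub_diag. reflexivity.
  - cbv beta. rewrite Nat.sub_diag. reflexivity.
  - intros t Ht. cbv beta.
    set (pert := fun e j => hstar j + (if Nat.eqb j t then e else 0)).
    assert (Hp : forall e j, pert e j = hstar j + (if Nat.eqb j t then e else 0)) by reflexivity.
    assert (Hku0 : ku <> 0) by lra. assert (Hkw0 : kw <> 0) by lra.
    destruct (states_deriv s ku m d1 d2 g q kw n u0 v0 w0 hstar t u v w pert Hku0 Hkw0
                (fun j => eq_refl) (fun j => eq_refl) (fun j => eq_refl) Hp T) as [HuT [_ HwT]].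
    pose proof (sum_deriv M1 M2 hstar t pert Hp T) as Hsum.
    assert (Htlt : Nat.ltb t T = true) by (apply Nat.ltb_lt; exact Ht).
    rewrite Htlt in Hsum.
    set (Phi := fun e => J_A s ku m d1 d2 g q kw n u0 v0 w0 M1 M2 N T (pert e)).
    set (D := (fst (fst (LB (T - S t)%nat)) - snd (LB (T - S t)%nat)) * (q * (1 - w t / kw) * (w t / kw - n) + 1) * w t).
    set (l := D - (2 * M1 * hstar t + M2)).
    assert (HPhi : is_derive Phi 0 l).
    { unfold Phi, J_A. eapply deq.
      apply dminus; [apply dplus; [exact HuT | apply is_derive_scal; exact HwT] | exact Hsum].
      unfold l, D. rewrite <- inner_end. rewrite inner_const by lia. rewrite inner_start.
      unfold growth. simpl. match goal with |- ?a = ?b => change (@eq R a b) end. unfold LB. ring. }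
    assert (Hp0 : pert 0 = hstar).
    { apply functional_extensionality. intros j. rewrite Hp. destruct (Nat.eqb j t); ring. }
    assert (HPhi0 : Phi 0 = J_A s ku m d1 d2 g q kw n u0 v0 w0 M1 M2 N T hstar).
    { unfold Phi. rewrite Hp0. reflexivity. }
    assert (HOm : forall e, 0 <= hstar t + e <= A -> Phi e <= Phi 0).
    { intros e He. rewrite HPhi0. apply Hopt. intros k Hk. rewrite Hp.
      destruct (Nat.eqb_spec k t) as [->|]; [lra|]. rewrite Rplus_0_r. apply Hom; auto. }
    destruct (Hom t Ht) as [H0 H1].
    set (c := (D - M2) / (2 * M1)).
    assert (Hc : (c - hstar t) * (2 * M1) = l) by (unfold c, l; field; lra).
    change ((D - M2) / (2 * M1)) with c.
    assert (Hr : hstar t < A -> l <= 0).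
    { intros Hlt. apply (dmax_right Phi l (A - hstar t) HPhi); [lra|].
      intros e He. apply HOm. lra. }
    assert (Hl : 0 < hstar t -> 0 <= l).
    { intros Hlt. apply (dmax_left Phi l (hstar t) HPhi); [lra|].
      intros e He. apply HOm. lra. }
    unfold Rmin, Rmax.
    destruct (Rle_lt_dec (hstar t) 0) as [Hz|Hz];
    [ assert (hstar t = 0) by lra; specialize (Hr ltac:(lra)) |];
    [| destruct (Rlt_le_dec (hstar t) A) as [HzA|HzA];
       [ specialize (Hr HzA); specialize (Hl Hz) | assert (hstar t = A) by lra; specialize (Hl Hz) ] ];
    repeat destruct Rle_dec; nra.
Qed.
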